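(* Let $k$ be a field and $O=k\langle z_1,z_2\rangle/(z_2^2z_1,\ z_2z_1^3,\ z_2z_1z_2z_1^2)$, graded with $\deg z_1=\deg z_2=1$. Then the Hilbert series of $O$ is $H_O(t)=\frac{1}{(1-t)^2(1-t^2)(1-t^3)}$.
   Context: The Hilbert series of a graded vector space $M=\bigoplus M_i$ is $H_M(t)=\sum_i(\dim_kM_i)t^i$. *)

(* Defs.v *)
From HB Require Import structures.
From mathcomp Require Import all_boot all_order all_algebra.
From mathcomp Require Import finmap.
From mathcomp.multinomials Require Import monalg.

Set Implicit Arguments.
Unset Strict Implicit.
Unset Printing Implicit Defensive.

Import Order.TTheory GRing.Theory Num.Theory.
Local Open Scope ring_scope.

(* The free associative algebra k<z_1, z_2> : the monoid algebra of the free
   monoid on two letters ('I_2; letter 0 is z_1, letter 1 is z_2). *)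
Definition freealg2 (k : fieldType) := {malg k[{fmonom 'I_2}]}.

Definition z1 (k : fieldType) : freealg2 k := << fmu (0 : 'I_2) >>.
Definition z2 (k : fieldType) : freealg2 k := << fmu (1 : 'I_2) >>.

Definition in_ideal2 (A : ringType) (S : seq A) (f : A) : Prop :=
  exists l : seq (A * A * A),
    all (fun t => t.1.2 \in S) l /\ f = \sum_(t <- l) t.1.1 * t.1.2 * t.2.

Definition homog (k : fieldType) (n : nat) (f : freealg2 k) : Prop :=
  forall w : {fmonom 'I_2}, size (w : seq 'I_2) != n -> f@_w = 0.

(* [quot_dim S n d] : the degree-n component of the graded quotient
   k<z_1,z_2> / (S)  (S a list of homogeneous elements) has dimension d over k:
   there are d homogeneous elements of degree n whose classes form a k-basis
   of the degree-n component of the quotient. *)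
Definition quot_dim (k : fieldType) (S : seq (freealg2 k)) (n d : nat) : Prop :=
  exists b : 'I_d -> freealg2 k,
    [/\ forall i, homog n (b i),
        (forall c : 'I_d -> k,
            in_ideal2 S (\sum_i (c i)%:MP * b i) -> forall i, c i = 0) &
        (forall f, homog n f ->
            exists c : 'I_d -> k, in_ideal2 S (f - \sum_i (c i)%:MP * b i))].

Definition O_rels (k : fieldType) : seq (freealg2 k) :=
  [:: z2 k * z2 k * z1 k;
      z2 k * z1 k * z1 k * z1 k;
      z2 k * z1 k * z2 k * z1 k * z1 k].

(* A formal power series h (coefficients h n) equals 1 / p(t) for a
   polynomial p with p(0) = 1, i.e. h * p = 1 as formal power series. *)
Definition series_is_inv (h : nat -> int) (p : {poly int}) : Prop :=
  forall n : nat, \sum_(j < n.+1) p`_j * h (n - j)%N = (n == 0%N)%:R.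

Definition denom_O : {poly int} :=
  (1 - 'X) ^+ 2 * (1 - 'X ^+ 2) * (1 - 'X ^+ 3).

(* Main.v *)
Require Import Defs.
From HB Require Import structures.
From mathcomp Require Import all_boot all_order all_algebra.
From mathcomp Require Import finmap.
From mathcomp.multinomials Require Import monalg.
From mathcomp Require Import zify ring.
Set Implicit Arguments.
Unset Strict Implicit.
Unset Printing Implicit Defensive.
Import Order.TTheory GRing.Theory Num.Theory.

Definition a0 : 'I_2 := ord0.
Definition a1 : 'I_2 := ord_max.

Lemma I2P (x : 'I_2) : x = a0 \/ x = a1.
Proof. by case: x => [[|[|m]] Hm]; [left|right|] => //; apply/eqP. Qed.

Definition r1 := [:: a1; a1; a0].
Definition r2 := [:: a1; a0; a0; a0].
Definition r3 := [:: a1; a0; a1; a0; a0].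
Definition relw := [:: r1; r2; r3].

Definition good (w : seq 'I_2) : bool := ~~ has (fun r => infix r w) relw.

Lemma goodE x w : good (x :: w) =
  [&& ~~ prefix r1 (x :: w), ~~ prefix r2 (x :: w), ~~ prefix r3 (x :: w) & good w].
Proof.
rewrite /good /= !negb_or.
by case: (a1 == x); case: (prefix [:: a1; a0] w); case: (prefix [:: a0; a0; a0] w); case: (prefix [:: a0; a1; a0; a0] w); case: (infix r1 w); case: (infix r2 w); case: (infix r3 w).
Qed.

Lemma good_cons x w : good (x :: w) -> good w.
Proof. by rewrite goodE => /and4P[]. Qed.

Lemma good0 w : good (a0 :: w) = good w.
Proof. by rewrite goodE. Qed.

Lemma infix_mem (s1 s2 : seq 'I_2) x : infix s1 s2 -> x \in s1 -> x \in s2.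
Proof. by move=> /infixP[s [s' ->]] Hx; rewrite !mem_cat Hx orbT. Qed.

Lemma good_nseq n : good (nseq n a1).
Proof.
apply/hasPn => r Hr; apply/negP => /infix_mem H.
have : a0 \in r by move: Hr; rewrite !inE => /or3P[]/eqP->.
by move/(H a0); rewrite mem_nseq => /andP[_].
Qed.

Fixpoint LB n : seq (seq 'I_2) :=
  nseq n a1 :: (if n is m.+2 then map (fun w => a1 :: a0 :: w) (LB m) else [::]).
Fixpoint LC n : seq (seq 'I_2) :=
  LB n ++ (if n is m.+3 then map (cat [:: a1; a0; a0]) (LC m) else [::]).
Fixpoint LD n : seq (seq 'I_2) :=
  LC n ++ (if n is m.+1 then map (cons a0) (LD m) else [::]).

Lemma LB_prop n w : w \in LB n ->
  [/\ size w = n, good w, ~~ prefix [:: a0] w & ~~ prefix [:: a1; a0; a0] w].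
Proof.
elim/ltn_ind: n w => n IH w.
case: n IH => [|[|m]] IH; rewrite /= ?inE.
- by move=> /eqP->; split.
- by move=> /eqP->; split.
case/orP => [/eqP->|].
  by split => //; [rewrite /= size_nseq | exact: (good_nseq m.+2)].
case/mapP => v Hv ->.
have [Hs Hg H0 H100] := IH m (leqnSn _ ) v Hv.
rewrite /= Hs; split => //.
rewrite goodE good0 Hg andbT.
move: H0 H100; case: v {Hv Hs Hg} => [|x v] //; case: (I2P x) => -> //=; rewrite ?prefix0s //.
Qed.


Lemma LBS m : LB m.+2 = nseq m.+2 a1 :: map (fun w => a1 :: a0 :: w) (LB m).
Proof. by []. Qed.
Lemma LCS m : LC m.+3 = LB m.+3 ++ map (cat [:: a1; a0; a0]) (LC m).
Proof. by []. Qed.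
Lemma LC_small n : n < 3 -> LC n = LB n.
Proof. by case: n => [|[|[|m]]]. Qed.
Lemma LDS n : LD n.+1 = LC n.+1 ++ map (cons a0) (LD n).
Proof. by []. Qed.
Lemma LD0 : LD 0 = LC 0.
Proof. by []. Qed.

Lemma LC_prop n w : w \in LC n -> [/\ size w = n, good w & ~~ prefix [:: a0] w].
Proof.
elim/ltn_ind: n w => n IH w.
have HB : w \in LB n -> [/\ size w = n, good w & ~~ prefix [:: a0] w].
  by case/LB_prop.
case: n IH HB => [|[|[|m]]] IH HB; try by rewrite LC_small.
rewrite LCS mem_cat; case/orP => [//|/mapP[v Hv ->]].
have Hm : m < m.+3 by apply: leq_trans (leqnSn _) (leqnSn _).
have [Hs Hg H0] := IH m Hm v Hv.
rewrite /= Hs; split => //.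
rewrite goodE /= good0 good0 Hg andbT.
move: H0; case: v {Hv Hs Hg} => [|x v] //; case: (I2P x) => -> //=.
Qed.

Lemma LC_LB n w : w \in LC n -> ~~ prefix [:: a1; a0; a0] w -> w \in LB n.
Proof.
case: n => [|[|[|m]]]; try by rewrite LC_small.
rewrite LCS mem_cat; case/orP => [//|/mapP[v Hv ->]].
by rewrite /= ?eqxx ?prefix0s.
Qed.

Lemma LD_prop n w : w \in LD n -> size w = n /\ good w.
Proof.
elim: n w => [|n IH] w; rewrite ?LD0 ?LDS.
  by case/LC_prop.
rewrite mem_cat.
case/orP => [/LC_prop[]//|/mapP[v Hv ->]].
by have [Hs Hg] := IH v Hv; rewrite /= Hs good0.
Qed.

Lemma LB_uniq n : uniq (LB n).
Proof.
elim/ltn_ind: n => n IH.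
case: n IH => [|[|m]] IH //=.
rewrite map_inj_uniq ?IH // ?andbT; last by move=> u v [].
by apply/mapP => -[v Hv] [].
Qed.

Lemma LC_uniq n : uniq (LC n).
Proof.
elim/ltn_ind: n => n IH.
case: n IH => [|[|[|m]]] IH; try by rewrite LC_small ?LB_uniq.
have Hm : m < m.+3 by apply: leq_trans (leqnSn _) (leqnSn _).
rewrite LCS cat_uniq LB_uniq map_inj_uniq ?(IH m Hm) ?andbT //; last by move=> u v /= [].
apply/hasPn => _ /mapP[v Hv ->]; apply/negP => /LB_prop[_ _ _].
by rewrite /= ?eqxx ?prefix0s.
Qed.

Lemma LD_uniq n : uniq (LD n).
Proof.
elim: n => [|n IH]; rewrite ?LD0 ?LC_uniq //.
rewrite LDS cat_uniq LC_uniq map_inj_uniq ?IH ?andbT //; last by move=> u v [].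
apply/hasPn => _ /mapP[v Hv ->]; apply/negP => /LC_prop[_ _].
by rewrite /= ?eqxx ?prefix0s.
Qed.

Lemma all1 w : good (a1 :: a1 :: w) -> w = nseq (size w) a1.
Proof.
elim: w => [|x w IH] //= Hg.
case: (I2P x) Hg => -> Hg.
  by move: Hg; rewrite goodE /= ?prefix0s.
by rewrite {1}(IH (good_cons Hg)).
Qed.

Lemma nseq_LB n : nseq n a1 \in LB n.
Proof. by case: n => [|[|m]] /=; rewrite inE eqxx. Qed.

Lemma LB_LC n w : w \in LB n -> w \in LC n.
Proof.
case: n => [|[|[|m]]]; try by rewrite LC_small.
by rewrite LCS mem_cat => ->.
Qed.

Lemma compC n w : size w <= n -> good w -> ~~ prefix [:: a0] w -> w \in LC (size w).
Proof.
elim: n w => [|n IH] w.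
  by case: w.
case: w => [|x w] // Hs Hg H0.
case: (I2P x) H0 Hg => -> H0 Hg.
  by move: H0; rewrite /= prefix0s.
clear H0.
case: w Hs Hg => [|y w] Hs Hg; first by [].
case: (I2P y) Hg => -> Hg; last first.
  change (size [:: a1, a1 & w]) with (size w).+2.
  rewrite (all1 Hg) size_nseq.
  exact: (LB_LC (nseq_LB (size w).+2)).
case: w Hs Hg => [|z w] Hs Hg; first by [].
case: (I2P z) Hg => -> Hg.
  have Hg' : good w by do 3 apply: good_cons Hg.
  have H0' : ~~ prefix [:: a0] w.
    by move: Hg; rewrite goodE => /and4P[_ /= ]; rewrite ?eqxx.
  change (size [:: a1, a0, a0 & w]) with (size w).+3.
  have := IH w _ Hg' H0'; rewrite /= in Hs.
  move=> /(_ ltac:(lia)) Hw.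
  by rewrite LCS mem_cat; apply/orP; right; apply/mapP; exists w.
have Hg' : good (a1 :: w) by do 2 apply: good_cons Hg.
have H100 : ~~ prefix [:: a1; a0; a0] (a1 :: w).
  by move: Hg; rewrite goodE => /and4P[_ _ /= ]; rewrite ?eqxx.
rewrite /= in Hs.
change (size [:: a1, a0, a1 & w]) with (size w).+3.
have /(_ ltac:(done)) := IH (a1 :: w) ltac:(rewrite /=; lia) Hg'.
move=> /LC_LB /(_ H100) Hw.
rewrite LCS mem_cat; apply/orP; left.
rewrite LBS inE; apply/orP; right; apply/mapP; exists (a1 :: w) => //.
Qed.

Lemma compD w : good w -> w \in LD (size w).
Proof.
elim: w => [|x w IH] // Hg.
case: (I2P x) Hg => -> Hg.
  change (size (a0 :: w)) with (size w).+1.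
  rewrite LDS mem_cat; apply/orP; right; apply/mapP; exists w => //.
  by apply: IH; rewrite -good0.
change (size (a1 :: w)) with (size w).+1.
rewrite LDS mem_cat; apply/orP; left.
by apply: (compC (leqnn _)).
Qed.

Local Open Scope ring_scope.


Definition Bs n := size (LB n).
Definition Cs n := size (LC n).
Definition Ds n := size (LD n).

Lemma Bs_eq n : Bs n.+2 = (Bs n).+1.
Proof. by rewrite /Bs LBS /= size_map. Qed.
Lemma Bs_small n : (n < 2)%N -> Bs n = 1%N.
Proof. by case: n => [|[|]]. Qed.
Lemma Cs_eq n : Cs n.+3 = (Bs n.+3 + Cs n)%N.
Proof. by rewrite /Cs LCS size_cat size_map. Qed.
Lemma Cs_small n : (n < 3)%N -> Cs n = Bs n.
Proof. by move=> H; rewrite /Cs LC_small. Qed.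
Lemma Ds_eq n : Ds n.+1 = (Cs n.+1 + Ds n)%N.
Proof. by rewrite /Ds LDS size_cat size_map. Qed.
Lemma Ds0 : Ds 0 = Cs 0.
Proof. by []. Qed.

Definition PP (f : nat -> nat) N : {poly int} := \poly_(i < N.+1) (f i)%:Z.
Definition eqN N (p q : {poly int}) := forall i, (i <= N)%N -> p`_i = q`_i.

Lemma eqN_mul N p q r : eqN N p q -> eqN N (p * r) (q * r).
Proof.
move=> H i Hi; rewrite !coefM; apply: eq_bigr => j _; rewrite H //.
by apply: leq_trans Hi; rewrite -ltnS.
Qed.

Lemma coefPP f N i : (i <= N)%N -> (PP f N)`_i = (f i)%:Z.
Proof. by move=> Hi; rewrite /PP coef_poly ltnS Hi. Qed.

Lemma stepD N : eqN N (PP Ds N * (1 - 'X)) (PP Cs N).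
Proof.
move=> i Hi; rewrite mulrBr mulr1 coefB coefMX coefPP // coefPP //.
case: i Hi => [|i] Hi /=; first by rewrite subr0 Ds0.
rewrite coefPP; last by apply: leq_trans Hi.
by rewrite Ds_eq PoszD addrK.
Qed.

Lemma stepC N : eqN N (PP Cs N * (1 - 'X^3)) (PP Bs N).
Proof.
move=> i Hi; rewrite mulrBr mulr1 coefB coefMXn coefPP // coefPP //.
case: ltnP => Hi3; first by rewrite subr0 Cs_small.
move: Hi Hi3; case: i => [|[|[|m]]] // Hi _.
rewrite subSS subSS subSS subn0 coefPP; last by lia.
by rewrite Cs_eq PoszD addrK.
Qed.

Lemma stepB N : eqN N (PP Bs N * (1 - 'X^2)) (PP (fun _ => 1%N) N).
Proof.
move=> i Hi; rewrite mulrBr mulr1 coefB coefMXn coefPP // coefPP //.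
case: ltnP => Hi2; first by rewrite subr0 Bs_small.
move: Hi Hi2; case: i => [|[|m]] // Hi _.
rewrite subSS subSS subn0 coefPP; last by lia.
by rewrite Bs_eq -addn1 PoszD addrC addKr.
Qed.

Lemma stepA N : eqN N (PP (fun _ => 1%N) N * (1 - 'X)) 1.
Proof.
move=> i Hi; rewrite mulrBr mulr1 coefB coefMX coefPP // coef1.
case: i Hi => [|i] Hi /=; first by rewrite subr0.
by rewrite coefPP ?subrr //; apply: leq_trans Hi.
Qed.

Lemma series_Ds : series_is_inv (fun n => (Ds n)%:Z) denom_O.
Proof.
move=> n.
have E : eqN n (denom_O * PP Ds n) 1.
  have -> : denom_O * PP Ds n = PP Ds n * (1 - 'X) * (1 - 'X^3) * (1 - 'X^2) * (1 - 'X).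
    by rewrite /denom_O; ring.
  move=> i Hi.
  have E1 := eqN_mul (1 - 'X) (eqN_mul (1 - 'X^2) (eqN_mul (1 - 'X^3) (@stepD n))).
  have E2 := eqN_mul (1 - 'X) (eqN_mul (1 - 'X^2) (@stepC n)).
  have E3 := eqN_mul (1 - 'X) (@stepB n).
  by rewrite E1 // E2 // E3 // stepA.
rewrite -coef1 -(E n (leqnn n)) coefM; apply: eq_bigr => j _.
by rewrite coefPP // leq_subr.
Qed.


Definition fm (s : seq 'I_2) : {fmonom 'I_2} := FMonom s.

Lemma mulU (k : fieldType) (m1 m2 : {fmonom 'I_2}) :
  (<< m1 >> * << m2 >> : freealg2 k) = << fm (m1 ++ m2) >>.
Proof.
rewrite malgM_def fgmulUU mulr1.
by rewrite /fm -fmM fmK.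
Qed.

Lemma z1E (k : fieldType) : z1 k = << fm [:: a0] >>.
Proof. have E : (0 : 'I_2) = a0 by apply/eqP. by rewrite /z1 E fmuE. Qed.
Lemma z2E (k : fieldType) : z2 k = << fm [:: a1] >>.
Proof. have E : (1 : 'I_2) = a1 by apply/eqP. by rewrite /z2 E fmuE. Qed.




Lemma e1 (k : fieldType) : z2 k * z2 k * z1 k = << fm r1 >>.
Proof.
have E : z2 k * z2 k * z1 k = (<<fm [:: a1]>> * <<fm [:: a1]>>) * <<fm [:: a0]>>.
  by rewrite -z1E -z2E.
by rewrite E !mulU.
Qed.
Lemma e2 (k : fieldType) : z2 k * z1 k * z1 k * z1 k = << fm r2 >>.
Proof.
have E : z2 k * z1 k * z1 k * z1 k = <<fm [:: a1]>> * <<fm [:: a0]>> * <<fm [:: a0]>> * <<fm [:: a0]>>.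
  by rewrite -z1E -z2E.
by rewrite E !mulU.
Qed.
Lemma e3 (k : fieldType) : z2 k * z1 k * z2 k * z1 k * z1 k = << fm r3 >>.
Proof.
have E : z2 k * z1 k * z2 k * z1 k * z1 k = <<fm [:: a1]>> * <<fm [:: a0]>> * <<fm [:: a1]>> * <<fm [:: a0]>> * <<fm [:: a0]>>.
  by rewrite -z1E -z2E.
by rewrite E !mulU.
Qed.
Lemma rels_eq (k : fieldType) : O_rels k = [:: << fm r1 >>; << fm r2 >>; << fm r3 >>].
Proof. by rewrite /O_rels -e1 -e2 -e3. Qed.

Lemma mem_rels (k : fieldType) s : s \in O_rels k -> exists2 r, r \in relw & s = << fm r >>.
Proof.
rewrite rels_eq !inE => /or3P[]/eqP->; [exists r1|exists r2|exists r3] => //; rewrite /relw;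
  by [exact: mem_head | apply: mem_behead; exact: mem_head | do 2 apply: mem_behead; exact: mem_head].
Qed.

Lemma rels_mem (k : fieldType) r : r \in relw -> << fm r >> \in O_rels k.
Proof.
move=> Hr; rewrite !inE in Hr; rewrite rels_eq; case/or3P: Hr => /eqP->.
- exact: mem_head.
- by apply: mem_behead; exact: mem_head.
- by do 2 apply: mem_behead; exact: mem_head.
Qed.

Lemma ideal0 (k : fieldType) : in_ideal2 (O_rels k) 0.
Proof. by exists [::]; rewrite big_nil. Qed.

Lemma idealD (k : fieldType) f g : in_ideal2 (O_rels k) f -> in_ideal2 (O_rels k) g ->
  in_ideal2 (O_rels k) (f + g).
Proof.
move=> [l1 [H1 ->]] [l2 [H2 ->]]; exists (l1 ++ l2).
by rewrite all_cat H1 H2 big_cat.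
Qed.

Lemma ideal_gen (k : fieldType) a s b : s \in O_rels k -> in_ideal2 (O_rels k) (a * s * b).
Proof. by move=> Hs; exists [:: (a, s, b)]; rewrite /= Hs big_seq1. Qed.

Definition Qr (k : fieldType) (r : seq 'I_2) (g : freealg2 k) :=
  forall m : {fmonom 'I_2}, ~~ infix r m -> g@_m = 0.

Lemma Q_mon (k : fieldType) r : @Qr k r << fm r >>.
Proof.
move=> m Hm; rewrite mcoeffU1; case: eqP => // E.
by move: Hm; rewrite -E /= infix_refl.
Qed.

Lemma Q_mull (k : fieldType) r (a g : freealg2 k) : Qr r g -> Qr r (a * g).
Proof.
move=> H m Hm; rewrite mcoeffMl big1 // => k1 _; rewrite big1 // => k2 _.
case: eqP => [E|]; last by rewrite mulr0n.
rewrite H ?mulr0 ?mul0rn //; apply: contra Hm => Hr.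
rewrite -E fmM; apply: (infix_trans Hr); exact: suffix_infix.
Qed.

Lemma Q_mulr (k : fieldType) r (a g : freealg2 k) : Qr r g -> Qr r (g * a).
Proof.
move=> H m Hm; rewrite mcoeffMl big1 // => k1 _; rewrite big1 // => k2 _.
case: eqP => [E|]; last by rewrite mulr0n.
rewrite H ?mul0r ?mul0rn //; apply: contra Hm => Hr.
rewrite -E fmM; apply: (infix_trans Hr); exact: prefix_infix.
Qed.

Lemma ideal_kill (k : fieldType) f : in_ideal2 (O_rels k) f ->
  forall m : {fmonom 'I_2}, good m -> f@_m = 0.
Proof.
move=> [l [Hl ->]] m Hm; rewrite raddf_sum /= big1_seq // => t /andP[_ Ht].
move/allP: Hl => /(_ t Ht) /mem_rels[r Hr ->].
have Hn : ~~ infix r m.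
  by apply: contra Hm => Hi; apply/hasP; exists r.
exact: (Q_mulr _ (Q_mull _ (@Q_mon k r)) Hn).
Qed.

Lemma ideal_of_bad (k : fieldType) (g : freealg2 k) : (forall m : {fmonom 'I_2}, good m -> g@_m = 0) ->
  in_ideal2 (O_rels k) g.
Proof.
move=> H; rewrite (monalgE g) big_seq.
apply: (big_ind (in_ideal2 (O_rels k))) => [|x y|m _]; first exact: ideal0.
  exact: idealD.
case: (boolP (good m)) => Hg.
  have -> : << g@_m *g m >> = 0 :> freealg2 k.
    by apply/malgP => m'; rewrite mcoeffU mcoeff0 H // mul0rn.
  exact: ideal0.
move: Hg; rewrite /good negbK => /hasP[r Hr /infixP[u [v Em]]].
have -> : << g@_m *g m >> = (g@_m)%:MP * << fm u >> * << fm r >> * << fm v >> :> freealg2 k.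
  rewrite -!mulrA mulU mulU mul_malgC; apply/malgP => m'.
  rewrite mcoeffU mcoeffZ mcoeffU1 mulr_natr; congr (_ *+ (_ == _)).
  by apply: val_inj; rewrite /= Em.
by apply: ideal_gen; apply: rels_mem.
Qed.




Theorem lemma7p3 (k : fieldType) :
  exists h : nat -> nat,
    (forall n, quot_dim (O_rels k) n (h n)) /\
    series_is_inv (fun n => (h n)%:Z) denom_O.
Proof.
exists Ds; split; last exact: series_Ds.
move=> n.
pose w (i : 'I_(Ds n)) := nth [::] (LD n) i.
have wP i : size (w i) = n /\ good (w i).
  by apply: LD_prop; apply: mem_nth; exact: (ltn_ord i).
have weq i j : (fm (w i) == fm (w j)) = (i == j).
  rewrite -val_eqE /= /w nth_uniq ?LD_uniq //; try exact: ltn_ord.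
have coefE (c : 'I_(Ds n) -> k) m :
    (\sum_i (c i)%:MP * << fm (w i) >> : freealg2 k)@_m
    = \sum_i c i * (fm (w i) == m)%:R.
  by rewrite raddf_sum; apply: eq_bigr => i _ /=; rewrite mcoeffCM mcoeffU1.
exists (fun i => << fm (w i) >>); split.
- move=> i m Hm; rewrite mcoeffU1; case: eqP => // E.
  by move: Hm; rewrite -E /= (proj1 (wP i)) eqxx.
- move=> c Hc i.
  have := @ideal_kill k _ Hc (fm (w i)) (proj2 (wP i)).
  rewrite coefE (bigD1 i) //= eqxx mulr1 big1 ?addr0 // => j Hj.
  by rewrite weq (negbTE Hj) mulr0.
- move=> f Hf; exists (fun i => f@_(fm (w i))).
  apply: ideal_of_bad => m Hm; rewrite mcoeffB coefE.
  case: (eqVneq (size m) n) => Hs; last first.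
    rewrite Hf // big1 ?subr0 // => i _.
    case: eqP => E; last by rewrite mulr0.
    by move: Hs; rewrite -E /= (proj1 (wP i)) eqxx.
  have Hin : (m : seq 'I_2) \in LD n by rewrite -Hs; apply: compD.
  have Hj : (index (m : seq 'I_2) (LD n) < Ds n)%N by rewrite /Ds index_mem.
  pose j : 'I_(Ds n) := Ordinal Hj.
  have Ewj : fm (w j) = m by rewrite /w /= nth_index // /fm fmK.
  rewrite (bigD1 j) //= Ewj eqxx mulr1 big1 ?addr0 ?subrr // => i Hij.
  by rewrite -Ewj weq (negbTE Hij) mulr0.
Qed.
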